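(* Let $\mathcal{R}$ be a ring and let $(\mathcal{C}^{\bullet},\partial)$ be a bigraded cochain complex of $\mathcal{R}$-modules as described in the context. Then there are three commutative diagrams with exact rows and exact columns. The first has rows \[ 0\to B^{3}(\mathcal{C},\partial)\cap\mathcal{C}^{3,0}\hookrightarrow B^{3}(\mathcal{C},\partial)\xrightarrow{\pi_{1}}\mathcal{B}^{3}_{1}\to0,\quad 0\to Z^{3}(\mathcal{N}_{0},\overline{\partial})\hookrightarrow Z^{3}(\mathcal{C},\partial)\xrightarrow{\pi_{1}}\ker(\rho_{3})\to0, \] \[ 0\to\frac{Z^{3}(\mathcal{N}_{0},\overline{\partial})}{B^{3}(\mathcal{C},\partial)\cap\mathcal{C}^{3,0}}\to H^{3}(\mathcal{C},\partial)\to\frac{\ker(\rho_{3})}{\mathcal{B}^{3}_{1}}\to0; \] the second has rows \[ 0\to\mathcal{B}^{3}_{1}\cap\mathcal{C}^{2,1}\hookrightarrow\mathcal{B}^{3}_{1}\xrightarrow{\pi_{2}}\mathcal{B}^{3}_{2}\to0,\quad 0\to\ker(\varrho_{3})\hookrightarrow\ker(\rho_{3})\xrightarrow{\pi_{2}}\mathcal{Z}^{3}_{2}\to0, \] \[ 0\to\frac{\ker(\varrho_{3})}{\mathcal{B}^{3}_{1}\cap\mathcal{C}^{2,1}}\to\frac{\ker(\rho_{3})}{\mathcal{B}^{3}_{1}}\to\frac{\mathcal{Z}^{3}_{2}}{\mathcal{B}^{3}_{2}}\to0; \] and the third has rows \[ 0\to\mathcal{B}^{3}_{2}\cap\mathcal{C}^{1,2}\hookrightarrow\mathcal{B}^{3}_{2}\xrightarrow{\pi_{3}}B^{3}(\mathcal{C}^{0,\bullet},\partial_{0,1})\to0,\quad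 0\to\mathcal{Z}^{3}_{2}\cap\mathcal{C}^{1,2}\hookrightarrow\mathcal{Z}^{3}_{2}\xrightarrow{\pi_{3}}\mathcal{Z}^{3}_{3}\to0, \] \[ 0\to\frac{\mathcal{Z}^{3}_{2}\cap\mathcal{C}^{1,2}}{\mathcal{B}^{3}_{2}\cap\mathcal{C}^{1,2}}\to\frac{\mathcal{Z}^{3}_{2}}{\mathcal{B}^{3}_{2}}\to\frac{\mathcal{Z}^{3}_{3}}{B^{3}(\mathcal{C}^{0,\bullet},\partial_{0,1})}\to0. \] In each diagram the first two rows are listed first (top row, then middle row), the vertical maps from the top to the middle row are inclusions, those from the middle to the bottom row are the canonical quotient projections, and the maps of the bottom row are induced by those of the middle row.
   Context: Setting: $\mathcal{C}^{\bullet}=\bigoplus_{k}\mathcal{C}^{k}$ is a graded $\mathcal{R}$-module with compatible bigrading $\mathcal{C}^{k}=\bigoplus_{p+q=k}\mathcal{C}^{p,q}$, $\mathcal{C}^{p,q}=\{0\}$ if $p<0$ or $q<0$; $\partial$ is $\mathcal{R}$-linear of degree $1$, $\partial^{2}=0$, and $\partial=\partial_{2,-1}+\partial_{1,0}+\partial_{0,1}$ with $\partial_{i,j}(\mathcal{C}^{p,q})\subseteq\mathcal{C}^{p+i,q+j}$. For $\eta\in\mathcal{C}^{k}$, $\eta_{p,q}$ is its $\mathcal{C}^{p,q}$-component. $G^{q}\mathcal{C}:=\bigoplus_{j\geq q}\mathcal{C}^{i,j}$ and $\pi_{q}:\mathcal{C}\to G^{q}\mathcal{C}$ is the projection along the bigrading.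 $Z,B,H$ denote cocycles, coboundaries, cohomology; $(\mathcal{C}^{0,\bullet},\partial_{0,1})$ is a cochain complex. Let $\mathcal{N}^{p,q}:=\ker(\partial_{0,1}|_{\mathcal{C}^{p,q}})\cap\ker(\partial_{2,-1}|_{\mathcal{C}^{p,q}})$ and, for $q\ge0$, $\mathcal{N}_{q}:=\bigoplus_{p}\mathcal{N}^{p-q,q}$ (degree-$m$ part $\mathcal{N}^{m-q,q}$); each $\mathcal{N}_{q}$ is a subcomplex of $(\mathcal{C},\partial)$, with differential $\overline{\partial}:=\partial|_{\mathcal{N}_q}=\partial_{1,0}|_{\mathcal{N}_q}$. Let $\mathcal{M}^{k}:=\{\eta\in\mathcal{C}^{k}\mid(\partial\eta)_{i,j}\in B^{k+1}(\mathcal{N}_{j},\overline{\partial})\ \text{for all } i+j=k+1\}$, $\mathcal{Z}^{k}_{q}:=\{\pi_{q}(\eta)\mid\eta\in\mathcal{M}^{k},\ \pi_{q}(\partial\eta)=0\}$ and $\mathcal{B}^{k}_{q}:=\pi_{q}(B^{k}(\mathcal{C},\partial))$. Let $\mathcal{A}^{k}:=\{\pi_{1}(\eta)\mid\eta\in\mathcal{C}^{k},\ \pi_{1}(\partial\eta)=0\}$ and $\mathcal{J}^{k}:=\mathcal{A}^{k}\cap\mathcal{C}^{k-1,1}$. For $\xi\in\mathcal{A}^{k}$ and any $\eta\in\mathcal{C}^{k}$ with $\pi_{1}\eta=\xi$, $\pi_{1}(\partial\eta)=0$, the element $\partial_{2,-1}\xi_{k-1,1}+\partial_{1,0}\eta_{k,0}$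 is a $(k+1)$-cocycle of $(\mathcal{N}_{0},\overline{\partial})$ whose class depends only on $\xi$; this defines the linear map $\rho_{k}:\mathcal{A}^{k}\to H^{k+1}(\mathcal{N}_{0},\overline{\partial})$, $\rho_{k}(\xi):=[\partial_{2,-1}\xi_{k-1,1}+\partial_{1,0}\eta_{k,0}]$, and $\varrho_{k}:=\rho_{k}|_{\mathcal{J}^{k}}$. *)

(* Defs.v *)
From HB Require Import structures.
From mathcomp Require Import all_boot all_order all_algebra.
Set Implicit Arguments. Unset Strict Implicit. Unset Printing Implicit Defensive.
Import GRing.Theory.
Local Open Scope ring_scope.

(* The total module C^* = (+)_k C^k = (+)_{p,q >= 0} C^{p,q} is represented
   as an R-module V together with the family of projections
   pr p q : V -> V onto the summand C^{p,q} (orthogonal idempotents whose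
   finite sums recover every element): this is exactly an internal direct sum
   decomposition V = (+)_{p,q in nat} C^{p,q}.  Negative bidegrees are absent
   (C^{p,q} = 0 for p<0 or q<0) since indices are natural numbers. *)
Record bicomplex (R : pzRingType) (V : lmodType R) := BiComplex {
  pr : nat -> nat -> {linear V -> V};
  pr_idem : forall p q v, pr p q (pr p q v) = pr p q v;
  pr_orth : forall p q p' q' v, (p, q) <> (p', q') -> pr p q (pr p' q' v) = 0;
  pr_fin : forall v, exists N : nat,
      v = \sum_(p < N) \sum_(q < N) pr p q v;
  d : {linear V -> V};
  d21 : {linear V -> V};
  d10 : {linear V -> V};
  d01 : {linear V -> V};
  d_split : forall v, d v = d21 v + d10 v + d01 v;
  dd : forall v, d (d v) = 0;
  d21_deg : forall p q v, pr p.+2 q (d21 (pr p q.+1 v)) = d21 (pr p q.+1 v);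
  d21_deg0 : forall p v, d21 (pr p 0 v) = 0;
  d10_deg : forall p q v, pr p.+1 q (d10 (pr p q v)) = d10 (pr p q v);
  d01_deg : forall p q v, pr p q.+1 (d01 (pr p q v)) = d01 (pr p q v)
}.

Section Defs.
Variables (R : pzRingType) (V : lmodType R) (C : @bicomplex R V).

Local Notation pr := (pr C).
Local Notation d := (d C).
Local Notation d21 := (d21 C).
Local Notation d10 := (d10 C).
Local Notation d01 := (d01 C).

Definition inC (p q : nat) (v : V) : Prop := pr p q v = v.

Definition deg (k : nat) (v : V) : Prop := v = \sum_(p < k.+1) pr p (k - p) v.

(* pi_q on C^k : projection onto (+)_{j >= q} C^{k-j,j} *)
Definition projG (k q : nat) (v : V) : V := \sum_(j < k.+1 | (q <= j)%N) pr (k - j) j v.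

Definition Z_C (k : nat) (v : V) : Prop := deg k v /\ d v = 0.
Definition B_C (k : nat) (v : V) : Prop :=
  match k with 0 => v = 0 | k'.+1 => exists u, deg k' u /\ v = d u end.

(* N^{p,q} and the degree-m part of N_q, namely N^{m-q,q} (zero if m < q) *)
Definition Nc (p q : nat) (v : V) : Prop := inC p q v /\ d01 v = 0 /\ d21 v = 0.
Definition Nq (q m : nat) (v : V) : Prop :=
  if (q <= m)%N then Nc (m - q) q v else v = 0.

Definition Z_N (q k : nat) (v : V) : Prop := Nq q k v /\ d v = 0.
Definition B_N (q k : nat) (v : V) : Prop :=
  match k with 0 => v = 0 | k'.+1 => exists u, Nq q k' u /\ v = d u end.

Definition Mk (k : nat) (eta : V) : Prop :=
  deg k eta /\ forall i j : nat, (i + j = k.+1)%N -> B_N j k.+1 (pr i j (d eta)).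

Definition Zcal (k q : nat) (v : V) : Prop :=
  exists eta, Mk k eta /\ projG k.+1 q (d eta) = 0 /\ v = projG k q eta.
Definition Bcal (k q : nat) (v : V) : Prop :=
  exists b, B_C k b /\ v = projG k q b.

Definition Ak (k : nat) (xi : V) : Prop :=
  exists eta, deg k eta /\ projG k.+1 1 (d eta) = 0 /\ xi = projG k 1 eta.
Definition Jk (k : nat) (xi : V) : Prop := Ak k xi /\ inC k.-1 1 xi.

(* c is a representative cocycle of rho_k(xi):
   c = d_{2,-1} xi_{k-1,1} + d_{1,0} eta_{k,0} for some eta with pi_1 eta = xi,
   pi_1 (d eta) = 0 *)
Definition rho_rep (k : nat) (xi c : V) : Prop :=
  exists eta, deg k eta /\ projG k 1 eta = xi /\ projG k.+1 1 (d eta) = 0 /\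
    c = d21 (pr k.-1 1 xi) + d10 (pr k 0 eta).

(* ker rho_k : those xi in A^k whose class rho_k(xi) in H^{k+1}(N_0) vanishes *)
Definition ker_rho (k : nat) (xi : V) : Prop :=
  Ak k xi /\ exists c, rho_rep k xi c /\ B_N 0 k.+1 c.
Definition ker_varrho (k : nat) (xi : V) : Prop := Jk k xi /\ ker_rho k xi.

Definition B_col (k : nat) (v : V) : Prop :=
  match k with 0 => v = 0 | k'.+1 => exists u, inC 0 k' u /\ v = d01 u end.

End Defs.

Section Diagrams.
Variables (R : pzRingType) (V : lmodType R).

Definition submod (P : V -> Prop) : Prop :=
  P 0 /\ forall (a : R) (x y : V), P x -> P y -> P (a *: x + y).

Definition capP (P Q : V -> Prop) : V -> Prop := fun v => P v /\ Q v.

(* 0 -> A1 --incl--> A2 --f--> A3 -> 0 is exact *)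
Definition ses_incl (A1 A2 : V -> Prop) (f : V -> V) (A3 : V -> Prop) : Prop :=
  [/\ forall x, A1 x -> A2 x,
      forall x, A2 x -> A3 (f x),
      forall x, A1 x -> f x = 0,
      forall x, A2 x -> f x = 0 -> A1 x
    & forall y, A3 y -> exists2 x, A2 x & f x = y].

(* exactness of 0 -> M1/T1 -> M2/T2 -> M3/T3 -> 0, where the maps are induced
   by the inclusion M1 -> M2 and by f : M2 -> M3 (unfolded on representatives) *)
Definition quot_exact (T1 T2 T3 M1 M2 M3 : V -> Prop) (f : V -> V) : Prop :=
  [/\ forall x, M1 x -> T2 x -> T1 x,
      forall x, M1 x -> T3 (f x),
      forall x, M2 x -> T3 (f x) -> exists2 y, M1 y & T2 (x - y)
    & forall z, M3 z -> exists2 x, M2 x & T3 (z - f x)].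

(* The commutative 3x3 diagram
       0 -> T1 -> T2 -f-> T3 -> 0
             v     v       v
       0 -> M1 -> M2 -f-> M3 -> 0
             v     v       v
       0 -> M1/T1 -> M2/T2 -> M3/T3 -> 0
   of R-modules with exact rows and columns (vertical maps: inclusions, then
   canonical projections; bottom row maps induced by the middle row). *)
Definition exact_diagram (T1 T2 T3 M1 M2 M3 : V -> Prop) (f : V -> V) : Prop :=
  [/\ [/\ submod T1, submod T2 & submod T3] /\ [/\ submod M1, submod M2 & submod M3],
      [/\ forall x, T1 x -> M1 x, forall x, T2 x -> M2 x & forall x, T3 x -> M3 x],
      ses_incl T1 T2 f T3,
      ses_incl M1 M2 f M3
    & quot_exact T1 T2 T3 M1 M2 M3 f].

End Diagrams.

(* Main.v *)
Require Import Defs.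
From HB Require Import structures.
From mathcomp Require Import all_boot all_order all_algebra zify.
From Stdlib Require Import FunctionalExtensionality PropExtensionality.
Set Implicit Arguments. Unset Strict Implicit. Unset Printing Implicit Defensive.
Import GRing.Theory.
Local Open Scope ring_scope.

Section P.
Variables (R : pzRingType) (V : lmodType R) (C : @bicomplex R V).
Local Notation pr := (pr C).
Local Notation d := (d C).
Local Notation d21 := (d21 C).
Local Notation d10 := (d10 C).
Local Notation d01 := (d01 C).

Lemma pr_pr p q a b v : pr p q (pr a b v) = if (p == a) && (q == b) then pr a b v else 0.
Proof.
case: ifP => [/andP[/eqP-> /eqP->]|H]; first exact: pr_idem.
apply: pr_orth => -[E1 E2]; by rewrite E1 E2 !eqxx in H.
Qed.

Lemma prC p q a b u : inC C a b u -> pr p q u = if (p == a) && (q == b) then u else 0.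
Proof. by move=> Hu; rewrite -{1}Hu pr_pr Hu. Qed.

Lemma pr_d21pr p q a b v : pr p q (d21 (pr a b v)) = if (p == a.+2) && (q.+1 == b) then d21 (pr a b v) else 0.
Proof.
case: b => [|b]; first by rewrite d21_deg0 linear0 andbF.
by rewrite -d21_deg pr_pr eqSS.
Qed.

Lemma pr_d10pr p q a b v : pr p q (d10 (pr a b v)) = if (p == a.+1) && (q == b) then d10 (pr a b v) else 0.
Proof. by rewrite -d10_deg pr_pr. Qed.

Lemma pr_d01pr p q a b v : pr p q (d01 (pr a b v)) = if (p == a) && (q == b.+1) then d01 (pr a b v) else 0.
Proof. by rewrite -d01_deg pr_pr. Qed.

Lemma ext x y : (forall p q, pr p q x = pr p q y) -> x = y.
Proof.
move=> H; apply/eqP; rewrite -subr_eq0; apply/eqP.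
have [N ->] := pr_fin C (x - y).
rewrite big1 // => i _; rewrite big1 // => j _.
by rewrite linearB /= H subrr.
Qed.

Definition hom k v := forall p q, (p + q != k)%N -> pr p q v = 0.

Lemma deg_hom k v : deg C k v -> hom k v.
Proof.
move=> E p q Hpq; rewrite (E : v = _) linear_sum big1 // => i _.
rewrite pr_pr; case: ifP => // /andP[/eqP Ep /eqP Eq].
have := ltn_ord i; move: Hpq; rewrite Ep Eq => /eqP; lia.
Qed.

Lemma hom_deg k v : hom k v -> deg C k v.
Proof.
move=> H; apply: ext => p q; rewrite linear_sum.
have [Epq|Npq] := eqVneq (p + q)%N k.
- have Hp : (p < k.+1)%N by lia.
  rewrite (bigD1 (Ordinal Hp)) //= big1 ?addr0.
  + by rewrite pr_pr (_ : k - p = q)%N ?eqxx //; lia.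
  + move=> i /eqP Hi; rewrite pr_pr; case: ifP => // /andP[/eqP Ep _].
    by case: Hi; apply: val_inj => /=.
- rewrite H // big1 // => i _; rewrite pr_pr; case: ifP => // /andP[/eqP Ep /eqP Eq].
  have := ltn_ord i; move: Npq; rewrite Ep Eq => /eqP; lia.
Qed.

Lemma deg0 k : deg C k 0.
Proof. by apply: hom_deg => p q _; rewrite linear0. Qed.
Lemma degD k x y : deg C k x -> deg C k y -> deg C k (x + y).
Proof. move=> /deg_hom Hx /deg_hom Hy; apply: hom_deg => p q H; by rewrite linearD /= Hx ?Hy ?addr0. Qed.
Lemma degN k x : deg C k x -> deg C k (- x).
Proof. move=> /deg_hom Hx; apply: hom_deg => p q H; by rewrite linearN /= Hx ?oppr0. Qed.
Lemma degB k x y : deg C k x -> deg C k y -> deg C k (x - y).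
Proof. by move=> Hx Hy; apply: degD => //; apply: degN. Qed.
Lemma degZ k a x : deg C k x -> deg C k (a *: x).
Proof. move=> /deg_hom Hx; apply: hom_deg => p q H; by rewrite linearZ /= Hx ?scaler0. Qed.
Lemma deg_inC a b k x : inC C a b x -> (a + b = k)%N -> deg C k x.
Proof.
move=> Hx Hk; apply: hom_deg => p q H; rewrite (prC _ _ Hx).
case: ifP => // /andP[/eqP Ep /eqP Eq]; move: H; rewrite Ep Eq Hk eqxx //.
Qed.
Lemma inC_pr a b v : inC C a b (pr a b v).
Proof. exact: pr_idem. Qed.
Lemma deg_d_pr a b v : deg C (a + b).+1 (d (pr a b v)).
Proof.
apply: hom_deg => p q H; rewrite d_split !linearD /= pr_d21pr pr_d10pr pr_d01pr.
move/eqP: H => H.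
by (case: ifP => [/andP[/eqP Ep /eqP Eq]|_]; first by exfalso; lia);
   (case: ifP => [/andP[/eqP Ep /eqP Eq]|_]; first by exfalso; lia);
   (case: ifP => [/andP[/eqP Ep /eqP Eq]|_]; first by exfalso; lia);
   rewrite !addr0.
Qed.
Lemma deg_d k x : deg C k x -> deg C k.+1 (d x).
Proof.
move=> E; rewrite (E : x = _) linear_sum.
apply: (big_ind (deg C k.+1)); [exact: deg0|exact: degD|].
move=> i _; have := deg_d_pr i (k - i) x; rewrite subnKC //; have := ltn_ord i; lia.
Qed.

Lemma projG31 v : projG C 3 1 v = pr 2 1 v + pr 1 2 v + pr 0 3 v.
Proof. by rewrite /projG big_mkcond !big_ord_recr big_ord0 /= !add0r. Qed.
Lemma projG32 v : projG C 3 2 v = pr 1 2 v + pr 0 3 v.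
Proof. by rewrite /projG big_mkcond !big_ord_recr big_ord0 /= !add0r. Qed.
Lemma projG33 v : projG C 3 3 v = pr 0 3 v.
Proof. by rewrite /projG big_mkcond !big_ord_recr big_ord0 /= !add0r. Qed.
Lemma projG41 v : projG C 4 1 v = pr 3 1 v + pr 2 2 v + pr 1 3 v + pr 0 4 v.
Proof. by rewrite /projG big_mkcond !big_ord_recr big_ord0 /= !add0r. Qed.
Lemma projG42 v : projG C 4 2 v = pr 2 2 v + pr 1 3 v + pr 0 4 v.
Proof. by rewrite /projG big_mkcond !big_ord_recr big_ord0 /= !add0r. Qed.
Lemma projG43 v : projG C 4 3 v = pr 1 3 v + pr 0 4 v.
Proof. by rewrite /projG big_mkcond !big_ord_recr big_ord0 /= !add0r. Qed.
Lemma deg2E v : deg C 2 v -> v = pr 0 2 v + pr 1 1 v + pr 2 0 v.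
Proof. by move=> E; rewrite {1}(E : v = _) !big_ord_recr big_ord0 /= !add0r. Qed.
Lemma deg3E v : deg C 3 v -> v = pr 0 3 v + pr 1 2 v + pr 2 1 v + pr 3 0 v.
Proof. by move=> E; rewrite {1}(E : v = _) !big_ord_recr big_ord0 /= !add0r. Qed.
Lemma deg4E v : deg C 4 v -> v = pr 0 4 v + pr 1 3 v + pr 2 2 v + pr 3 1 v + pr 4 0 v.
Proof. by move=> E; rewrite {1}(E : v = _) !big_ord_recr big_ord0 /= !add0r. Qed.

Lemma eq_deg3 a b : deg C 3 a -> deg C 3 b ->
  pr 0 3 a = pr 0 3 b -> pr 1 2 a = pr 1 2 b -> pr 2 1 a = pr 2 1 b -> pr 3 0 a = pr 3 0 b -> a = b.
Proof. by move=> Ha Hb e1 e2 e3 e4; rewrite (deg3E Ha) (deg3E Hb) e1 e2 e3 e4. Qed.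
Lemma eq_deg4 a b : deg C 4 a -> deg C 4 b ->
  pr 0 4 a = pr 0 4 b -> pr 1 3 a = pr 1 3 b -> pr 2 2 a = pr 2 2 b -> pr 3 1 a = pr 3 1 b ->
  pr 4 0 a = pr 4 0 b -> a = b.
Proof. by move=> Ha Hb e1 e2 e3 e4 e5; rewrite (deg4E Ha) (deg4E Hb) e1 e2 e3 e4 e5. Qed.

Lemma projGP k j a x y : projG C k j (a *: x + y) = a *: projG C k j x + projG C k j y.
Proof. by rewrite /projG scaler_sumr -big_split; apply: eq_bigr => i _; rewrite linearP. Qed.
Lemma projG0 k j : projG C k j 0 = 0.
Proof. by rewrite /projG big1 // => i _; rewrite linear0. Qed.
Lemma projGB k j x y : projG C k j (x - y) = projG C k j x - projG C k j y.
Proof. by rewrite -scaleN1r addrC projGP scaleN1r addrC. Qed.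

Lemma dN a b u : Nc C a b u -> d u = d10 u /\ inC C a.+1 b (d u).
Proof.
case=> Hu [H01 H21]; have E : d u = d10 u by rewrite d_split H01 H21 add0r addr0.
split => //; rewrite E /inC -Hu; exact: d10_deg.
Qed.

Lemma d3_40 eta : deg C 3 eta -> pr 4 0 (d eta) = d21 (pr 2 1 eta) + d10 (pr 3 0 eta).
Proof.
move=> /deg3E E; rewrite {1}E !d_split !linearD /= !pr_d21pr !pr_d10pr !pr_d01pr /=.
by rewrite !addr0 !add0r.
Qed.
Lemma d2_03 u : deg C 2 u -> pr 0 3 (d u) = d01 (pr 0 2 u).
Proof.
move=> /deg2E E; rewrite {1}E !d_split !linearD /= !pr_d21pr !pr_d10pr !pr_d01pr /=.
by rewrite !addr0 !add0r.
Qed.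

Ltac simp := rewrite ?projG31 ?projG32 ?projG33 ?projG41 ?projG42 ?projG43 ?linearD ?linearN ?linearB ?linear0 /= ?pr_pr /= ?linear0 ?addr0 ?add0r ?oppr0 ?subr0 ?sub0r.

Lemma projG41_0 w : projG C 4 1 w = 0 -> [/\ pr 3 1 w = 0, pr 2 2 w = 0, pr 1 3 w = 0 & pr 0 4 w = 0].
Proof.
move=> H; have h1 := congr1 (pr 3 1) H; have h2 := congr1 (pr 2 2) H;
have h3 := congr1 (pr 1 3) H; have h4 := congr1 (pr 0 4) H.
by move: h1 h2 h3 h4; simp.
Qed.
Lemma projG42_0 w : projG C 4 2 w = 0 -> [/\ pr 2 2 w = 0, pr 1 3 w = 0 & pr 0 4 w = 0].
Proof.
move=> H; have h2 := congr1 (pr 2 2) H;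
have h3 := congr1 (pr 1 3) H; have h4 := congr1 (pr 0 4) H.
by move: h2 h3 h4; simp.
Qed.
Lemma projG43_0 w : projG C 4 3 w = 0 -> pr 1 3 w = 0 /\ pr 0 4 w = 0.
Proof.
move=> H; have h3 := congr1 (pr 1 3) H; have h4 := congr1 (pr 0 4) H.
by move: h3 h4; simp.
Qed.

Lemma p32_31 y : projG C 3 2 (projG C 3 1 y) = projG C 3 2 y.
Proof. by simp. Qed.
Lemma p33_32 y : projG C 3 3 (projG C 3 2 y) = projG C 3 3 y.
Proof. by simp. Qed.
Lemma p31_30 u : inC C 3 0 u -> projG C 3 1 u = 0.
Proof. by move=> Hu; rewrite projG31 !(prC _ _ Hu) /= !addr0. Qed.
Lemma p32_30 u : inC C 3 0 u -> projG C 3 2 u = 0.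
Proof. by move=> Hu; rewrite projG32 !(prC _ _ Hu) /= !addr0. Qed.
Lemma p33_30 u : inC C 3 0 u -> projG C 3 3 u = 0.
Proof. by move=> Hu; rewrite projG33 !(prC _ _ Hu) /=. Qed.
Lemma p32_21 u : inC C 2 1 u -> projG C 3 2 u = 0.
Proof. by move=> Hu; rewrite projG32 !(prC _ _ Hu) /= !addr0. Qed.
Lemma p33_21 u : inC C 2 1 u -> projG C 3 3 u = 0.
Proof. by move=> Hu; rewrite projG33 !(prC _ _ Hu) /=. Qed.
Lemma p33_12 u : inC C 1 2 u -> projG C 3 3 u = 0.
Proof. by move=> Hu; rewrite projG33 !(prC _ _ Hu) /=. Qed.

Lemma L30 y : deg C 3 y -> projG C 3 1 y = 0 -> inC C 3 0 y.
Proof.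
move=> Hy H; have h1 := congr1 (pr 2 1) H; have h2 := congr1 (pr 1 2) H;
have h3 := congr1 (pr 0 3) H; move: h1 h2 h3; simp => h1 h2 h3.
by rewrite /inC {2}(deg3E Hy) h1 h2 h3 !add0r.
Qed.
Lemma L21 y : projG C 3 2 (projG C 3 1 y) = 0 -> inC C 2 1 (projG C 3 1 y).
Proof.
rewrite p32_31 projG32 => H; rewrite /inC; simp.
by rewrite -addrA H addr0.
Qed.
Lemma L12 y : projG C 3 3 (projG C 3 2 y) = 0 -> inC C 1 2 (projG C 3 2 y).
Proof.
rewrite p33_32 projG33 => H; rewrite /inC; simp.
by rewrite H addr0.
Qed.

Lemma Nq0 j m : Nq C j m 0.
Proof. rewrite /Nq; case: ifP => _ //; split; [exact: linear0 | split; exact: linear0]. Qed.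

Definition Zj j v := exists eta, Z_C C 3 eta /\ v = projG C 3 j eta.

Lemma ker_rhoE xi : ker_rho C 3 xi <-> Zj 1 xi.
Proof.
split.
- case=> _ [c [[eta [Heta [Hxi [H41 Hc]]]] [u [Hu Hcu]]]].
  have Nu : Nc C 3 0 u := Hu.
  have [du Cdu] := dN Nu.
  have degu : deg C 3 u by apply: (deg_inC Nu.1).
  exists (eta - u); split; first split.
  + exact: degB.
  + rewrite linearB /=; apply/eqP; rewrite subr_eq0; apply/eqP.
    rewrite -Hcu.
    have [h31 h22 h13 h04] := projG41_0 H41.
    apply: eq_deg4; [exact: deg_d| by rewrite Hcu; apply: deg_d|..];
      rewrite ?h31 ?h22 ?h13 ?h04 Hcu (prC _ _ Cdu) //=.
    by rewrite (d3_40 Heta) -Hcu Hc -Hxi; simp.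
  + by rewrite projGB (p31_30 Nu.1) subr0 Hxi.
- case=> eta [[Heta Hd] ->]; split.
  + by exists eta; rewrite Hd projG0.
  + exists (d21 (pr 2 1 (projG C 3 1 eta)) + d10 (pr 3 0 eta)); split.
    * by exists eta; rewrite Hd projG0.
    * exists 0; split; first exact: Nq0.
      rewrite linear0; simp. by rewrite -d3_40 // Hd linear0.
Qed.

Lemma Zcal2E v : Zcal C 3 2 v <-> Zj 2 v.
Proof.
split.
- case=> eta [[Heta HM] [H42 ->]].
  have [u0 [Hu0 E0]] := HM 4%N 0%N erefl.
  have [u1 [Hu1 E1]] := HM 3%N 1%N erefl.
  have N0 : Nc C 3 0 u0 := Hu0.
  have N1 : Nc C 2 1 u1 := Hu1.
  have [_ C0] := dN N0; have [_ C1] := dN N1.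
  have [h22 h13 h04] := projG42_0 H42.
  have dg0 : deg C 3 u0 by apply: (deg_inC N0.1).
  have dg1 : deg C 3 u1 by apply: (deg_inC N1.1).
  exists (eta - u0 - u1); split; first split.
  + by apply: degB => //; apply: degB.
  + rewrite !linearB /=.
    apply: eq_deg4; [by apply: degB; [apply: degB|]; apply: deg_d| exact: deg0|..];
    rewrite !linearB /= ?h22 ?h13 ?h04 !(prC _ _ C0) !(prC _ _ C1) /= ?linear0 ?subr0 ?sub0r ?oppr0 ?addr0 ?add0r //;
    by rewrite ?E0 ?E1 ?E2 ?subrr ?addr0 ?add0r.
  + by rewrite !projGB (p32_30 N0.1) (p32_21 N1.1) !subr0.
- case=> eta [[Heta Hd] ->]; exists eta; split; last by rewrite Hd projG0.
  split => // i j _; rewrite Hd linear0; exists 0; split; [exact: Nq0|by rewrite linear0].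
Qed.

Lemma Zcal3E v : Zcal C 3 3 v <-> Zj 3 v.
Proof.
split.
- case=> eta [[Heta HM] [H43 ->]].
  have [u0 [Hu0 E0]] := HM 4%N 0%N erefl.
  have [u1 [Hu1 E1]] := HM 3%N 1%N erefl.
  have [u2 [Hu2 E2]] := HM 2%N 2%N erefl.
  have N0 : Nc C 3 0 u0 := Hu0.
  have N1 : Nc C 2 1 u1 := Hu1.
  have N2 : Nc C 1 2 u2 := Hu2.
  have [_ C0] := dN N0; have [_ C1] := dN N1; have [_ C2] := dN N2.
  have [h13 h04] := projG43_0 H43.
  have dg0 : deg C 3 u0 by apply: (deg_inC N0.1).
  have dg1 : deg C 3 u1 by apply: (deg_inC N1.1).
  have dg2 : deg C 3 u2 by apply: (deg_inC N2.1).
  exists (eta - u0 - u1 - u2); split; first split.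
  + by apply: degB => //; apply: degB => //; apply: degB.
  + rewrite !linearB /=.
    apply: eq_deg4; [by apply: degB; [apply: degB; [apply: degB|]|]; apply: deg_d| exact: deg0|..];
    rewrite !linearB /= ?h13 ?h04 !(prC _ _ C0) !(prC _ _ C1) !(prC _ _ C2) /= ?linear0 ?subr0 ?sub0r ?oppr0 ?addr0 ?add0r //;
    by rewrite ?E0 ?E1 ?E2 ?subrr ?addr0 ?add0r.
  + by rewrite !projGB (p33_30 N0.1) (p33_21 N1.1) (p33_12 N2.1) !subr0.
- case=> eta [[Heta Hd] ->]; exists eta; split; last by rewrite Hd projG0.
  split => // i j _; rewrite Hd linear0; exists 0; split; [exact: Nq0|by rewrite linear0].
Qed.

Lemma ZNE x : Z_N C 0 3 x <-> capP (Z_C C 3) (inC C 3 0) x.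
Proof.
split.
- case=> Hx Hd; have N : Nc C 3 0 x := Hx.
  split; [split; [exact: (deg_inC N.1) | exact: Hd] | exact: N.1].
- case=> [[Hdeg Hd] Hx]; split => //.
  have h := congr1 (pr 3 1) Hd.
  move: h; rewrite linear0 -{1}Hx d_split !linearD /= pr_d21pr pr_d10pr pr_d01pr /= !add0r Hx => h.
  split => //; split => //; by rewrite -Hx d21_deg0.
Qed.

Lemma kvE x : ker_varrho C 3 x <-> capP (Zj 1) (inC C 2 1) x.
Proof.
split.
- by case=> [[_ Hi] Hk]; split; [exact/ker_rhoE|exact: Hi].
- case=> Hz Hi; have Hk := (ker_rhoE x).2 Hz; split => //; split => //; exact: Hk.1.
Qed.

Lemma submodB (P : V -> Prop) x y : submod P -> P x -> P y -> P (x - y).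
Proof. by case=> _ H Px Py; have := H (-1) y x Py Px; rewrite scaleN1r addrC. Qed.

Lemma submod_cap (P Q : V -> Prop) : submod P -> submod Q -> submod (capP P Q).
Proof.
case=> P0 HP [Q0 HQ]; split; first by split.
by move=> a x y [Px Qx] [Py Qy]; split; [apply: HP|apply: HQ].
Qed.

Lemma submod_inC a b : submod (inC C a b).
Proof.
split; first exact: linear0.
by move=> c x y Hx Hy; rewrite /inC linearP /= Hx Hy.
Qed.

Lemma submod_ZC : submod (Z_C C 3).
Proof.
split; first by split; [exact: deg0|exact: linear0].
move=> a x y [dx Hx] [dy Hy]; split; first by apply: degD => //; apply: degZ.
by rewrite linearP /= Hx Hy scaler0 addr0.
Qed.

Lemma submod_BC : submod (B_C C 3).
Proof.
split; first by exists 0; split; [exact: deg0|rewrite linear0].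
move=> a x y [u [du ->]] [w [dw ->]]; exists (a *: u + w); split; last by rewrite linearP.
by apply: degD => //; apply: degZ.
Qed.

Lemma submod_img (P : V -> Prop) j : submod P ->
  submod (fun v => exists e, P e /\ v = projG C 3 j e).
Proof.
case=> P0 HP; split; first by exists 0; split; last by rewrite projG0.
move=> a x y [e [Pe ->]] [e' [Pe' ->]]; exists (a *: e + e'); split; first exact: HP.
by rewrite projGP.
Qed.

Lemma submod_Zj j : submod (Zj j).
Proof. exact: (submod_img j submod_ZC). Qed.
Lemma submod_Bcal j : submod (Bcal C 3 j).
Proof. exact: (submod_img j submod_BC). Qed.

Lemma submod_Bcol : submod (B_col C 3).
Proof.
split; first by exists 0; split; [exact: linear0|rewrite linear0].
move=> a x y [u [du ->]] [w [dw ->]]; exists (a *: u + w); split; last by rewrite linearP.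
by rewrite /inC linearP /= du dw.
Qed.

Lemma B_Z b : B_C C 3 b -> Z_C C 3 b.
Proof. by case=> u [du ->]; split; [exact: deg_d|exact: dd]. Qed.
Lemma Bcal_Zj j x : Bcal C 3 j x -> Zj j x.
Proof. by case=> b [Hb ->]; exists b; split => //; exact: B_Z. Qed.

Lemma diagram_of (T1 T2 T3 M1 M2 M3 : V -> Prop) (f : V -> V) :
  (forall x y, f (x - y) = f x - f y) ->
  submod T1 -> submod T2 -> submod T3 -> submod M1 -> submod M2 -> submod M3 ->
  (forall x, T1 x -> M1 x) -> (forall x, T2 x -> M2 x) -> (forall x, T3 x -> M3 x) ->
  ses_incl T1 T2 f T3 -> ses_incl M1 M2 f M3 ->
  exact_diagram T1 T2 T3 M1 M2 M3 f.
Proof.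
move=> fB sT1 sT2 sT3 sM1 sM2 sM3 i1 i2 i3 sT sM; split => //.
have T30 : T3 0 by case: sT3.
case: (sT) => tI tF tK tKer tS; case: (sM) => mI mF mK mKer mS.
split.
- by move=> x Mx Tx; apply: tKer => //; exact: mK.
- by move=> x Mx; rewrite mK.
- move=> x Mx /tS [t Tt ft]; exists (x - t).
  + by apply: mKer; [apply: submodB => //; exact: i2|rewrite fB ft subrr].
  + by rewrite opprB addrC subrK.
- by move=> z Mz; have [x Mx fx] := mS z Mz; exists x => //; rewrite fx subrr.
Qed.

Lemma diag1 : exact_diagram
        (capP (B_C C 3) (inC C 3 0)) (B_C C 3) (Bcal C 3 1)
        (capP (Z_C C 3) (inC C 3 0)) (Z_C C 3) (Zj 1)
        (projG C 3 1).
Proof.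
apply: diagram_of.
- exact: projGB.
- exact: (submod_cap submod_BC (submod_inC _ _)).
- exact: submod_BC.
- exact: submod_Bcal.
- exact: (submod_cap submod_ZC (submod_inC _ _)).
- exact: submod_ZC.
- exact: submod_Zj.
- by move=> x [Hb Hc]; split => //; exact: B_Z.
- exact: B_Z.
- exact: Bcal_Zj.
- split.
  + by move=> x [].
  + by move=> x Hx; exists x.
  + by move=> x [_ Hc]; exact: p31_30.
  + by move=> x Hx H; split => //; apply: L30 => //; exact: (B_Z Hx).1.
  + by move=> y [b [Hb ->]]; exists b.
- split.
  + by move=> x [].
  + by move=> x Hx; exists x.
  + by move=> x [_ Hc]; exact: p31_30.
  + by move=> x Hx H; split => //; apply: L30 => //; exact: Hx.1.
  + by move=> y [b [Hb ->]]; exists b.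
Qed.

Lemma diag2 : exact_diagram
        (capP (Bcal C 3 1) (inC C 2 1)) (Bcal C 3 1) (Bcal C 3 2)
        (capP (Zj 1) (inC C 2 1)) (Zj 1) (Zj 2)
        (projG C 3 2).
Proof.
apply: diagram_of.
- exact: projGB.
- exact: (submod_cap (submod_Bcal _) (submod_inC _ _)).
- exact: submod_Bcal.
- exact: submod_Bcal.
- exact: (submod_cap (submod_Zj _) (submod_inC _ _)).
- exact: submod_Zj.
- exact: submod_Zj.
- by move=> x [Hb Hc]; split => //; exact: Bcal_Zj.
- exact: Bcal_Zj.
- exact: Bcal_Zj.
- split.
  + by move=> x [].
  + by move=> x [b [Hb ->]]; exists b; rewrite p32_31.
  + by move=> x [_ Hc]; exact: p32_21.
  + by move=> x [b [Hb ->]] H; split; [exists b|exact: L21].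
  + by move=> y [b [Hb ->]]; exists (projG C 3 1 b); [exists b|rewrite p32_31].
- split.
  + by move=> x [].
  + by move=> x [b [Hb ->]]; exists b; rewrite p32_31.
  + by move=> x [_ Hc]; exact: p32_21.
  + by move=> x [b [Hb ->]] H; split; [exists b|exact: L21].
  + by move=> y [b [Hb ->]]; exists (projG C 3 1 b); [exists b|rewrite p32_31].
Qed.

Lemma p33_d u : deg C 2 u -> projG C 3 3 (d u) = d01 (pr 0 2 u).
Proof. by move=> Hu; rewrite projG33 d2_03. Qed.

Lemma diag3 : exact_diagram
        (capP (Bcal C 3 2) (inC C 1 2)) (Bcal C 3 2) (B_col C 3)
        (capP (Zj 2) (inC C 1 2)) (Zj 2) (Zj 3)
        (projG C 3 3).
Proof.
apply: diagram_of.
- exact: projGB.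
- exact: (submod_cap (submod_Bcal _) (submod_inC _ _)).
- exact: submod_Bcal.
- exact: submod_Bcol.
- exact: (submod_cap (submod_Zj _) (submod_inC _ _)).
- exact: submod_Zj.
- exact: submod_Zj.
- by move=> x [Hb Hc]; split => //; exact: Bcal_Zj.
- exact: Bcal_Zj.
- move=> y [u [Hu ->]]; have du : deg C 2 u by apply: (deg_inC Hu).
  exists (d u); split; first exact: (B_Z (ex_intro _ u (conj du erefl))).
  by rewrite p33_d // Hu.
- split.
  + by move=> x [].
  + move=> x [b [[u [du ->]] ->]]; exists (pr 0 2 u); split; first exact: inC_pr.
    by rewrite p33_32 p33_d.
  + by move=> x [_ Hc]; exact: p33_12.
  + by move=> x [b [Hb ->]] H; split; [exists b|exact: L12].
  + move=> y [u [Hu ->]]; have du : deg C 2 u by apply: (deg_inC Hu).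
    exists (projG C 3 2 (d u)); first by exists (d u); split => //; exists u.
    by rewrite p33_32 p33_d // Hu.
- split.
  + by move=> x [].
  + by move=> x [b [Hb ->]]; exists b; rewrite p33_32.
  + by move=> x [_ Hc]; exact: p33_12.
  + by move=> x [b [Hb ->]] H; split; [exists b|exact: L12].
  + by move=> y [b [Hb ->]]; exists (projG C 3 2 b); [exists b|rewrite p33_32].
Qed.

End P.

Theorem theorem5p7 (R : pzRingType) (V : lmodType R) (C : @bicomplex R V) :
  [/\ exact_diagram
        (capP (B_C C 3) (inC C 3 0)) (B_C C 3) (Bcal C 3 1)
        (Z_N C 0 3) (Z_C C 3) (ker_rho C 3)
        (projG C 3 1),
      exact_diagram
        (capP (Bcal C 3 1) (inC C 2 1)) (Bcal C 3 1) (Bcal C 3 2)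
        (ker_varrho C 3) (ker_rho C 3) (Zcal C 3 2)
        (projG C 3 2)
    & exact_diagram
        (capP (Bcal C 3 2) (inC C 1 2)) (Bcal C 3 2) (B_col C 3)
        (capP (Zcal C 3 2) (inC C 1 2)) (Zcal C 3 2) (Zcal C 3 3)
        (projG C 3 3)].
Proof.
have E1 : ker_rho C 3 = Zj C 1.
  by apply: functional_extensionality => x; apply: propositional_extensionality; exact: ker_rhoE.
have E2 : Zcal C 3 2 = Zj C 2.
  by apply: functional_extensionality => x; apply: propositional_extensionality; exact: Zcal2E.
have E3 : Zcal C 3 3 = Zj C 3.
  by apply: functional_extensionality => x; apply: propositional_extensionality; exact: Zcal3E.
have E4 : Z_N C 0 3 = capP (Z_C C 3) (inC C 3 0).
  by apply: functional_extensionality => x; apply: propositional_extensionality; exact: ZNE.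
have E5 : ker_varrho C 3 = capP (Zj C 1) (inC C 2 1).
  by apply: functional_extensionality => x; apply: propositional_extensionality; exact: kvE.
rewrite E1 E2 E3 E4 E5; split; [exact: diag1|exact: diag2|exact: diag3].
Qed.
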